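(* The lattice of subvarieties of $\mathbf{K}_2$ has cardinality $2^\omega$.
   Context: A pseudocomplemented de Morgan algebra is $(L;\wedge,\vee,{}^\ast,{}^\prime,0,1)$ with bounded distributive lattice reduct, pseudocomplement ${}^\ast$ and de Morgan involution ${}^\prime$. With $x^{0(\prime\ast)}=x$, $x^{(k+1)(\prime\ast)}=((x^{k(\prime\ast)})')^\ast$, $\mathbf{K}_2$ is the variety of such algebras satisfying $x\wedge x^{\prime\ast\prime}\le y\vee y^\ast$ (regularity), $x\wedge x'\le y\vee y'$ (Kleene), and $(x\wedge x^{\prime\ast})^{2(\prime\ast)}=(x\wedge x^{\prime\ast})^{3(\prime\ast)}$ (range $2$). *)

(* Defs.v *)
From Stdlib Require Import Arith.

Record alg := Alg {
  car :> Type;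
  meet : car -> car -> car;
  join : car -> car -> car;
  pstar : car -> car;
  dm : car -> car;
  zero : car;
  one : car
}.

Definition le (A : alg) (x y : car A) : Prop := meet A x y = x.

Definition is_bdl (A : alg) : Prop :=
  (forall x y, meet A x y = meet A y x) /\
  (forall x y, join A x y = join A y x) /\
  (forall x y z, meet A x (meet A y z) = meet A (meet A x y) z) /\
  (forall x y z, join A x (join A y z) = join A (join A x y) z) /\
  (forall x y, meet A x (join A x y) = x) /\
  (forall x y, join A x (meet A x y) = x) /\
  (forall x y z, meet A x (join A y z) = join A (meet A x y) (meet A x z)) /\
  (forall x, meet A x (zero A) = zero A) /\
  (forall x, join A x (one A) = one A).

Definition is_pcdma (A : alg) : Prop :=
  is_bdl A /\
  (forall x y, meet A y x = zero A <-> le A y (pstar A x)) /\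
  (forall x, dm A (dm A x) = x) /\
  (forall x y, dm A (meet A x y) = join A (dm A x) (dm A y)) /\
  (forall x y, dm A (join A x y) = meet A (dm A x) (dm A y)) /\
  dm A (zero A) = one A /\ dm A (one A) = zero A.

Definition ps (A : alg) (x : car A) : car A := pstar A (dm A x).

Definition in_K2 (A : alg) : Prop :=
  is_pcdma A /\
  (* regularity law *)
  (forall x y, le A (meet A x (dm A (ps A x))) (join A y (pstar A y))) /\
  (* Kleene *)
  (forall x y, le A (meet A x (dm A x)) (join A y (dm A y))) /\
  (* range 2 law *)
  (forall x, let u := meet A x (ps A x) in
     ps A (ps A u) = ps A (ps A (ps A u))).

Inductive term : Type :=
| tVar : nat -> term
| tMeet : term -> term -> term
| tJoin : term -> term -> term
| tStar : term -> term
| tDm : term -> term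
| tZero : term
| tOne : term.

Fixpoint eval (A : alg) (v : nat -> car A) (t : term) : car A :=
  match t with
  | tVar n => v n
  | tMeet s u => meet A (eval A v s) (eval A v u)
  | tJoin s u => join A (eval A v s) (eval A v u)
  | tStar s => pstar A (eval A v s)
  | tDm s => dm A (eval A v s)
  | tZero => zero A
  | tOne => one A
  end.

Definition identity := (term * term)%type.

Definition satisfies (A : alg) (e : identity) : Prop :=
  forall v : nat -> car A, eval A v (fst e) = eval A v (snd e).

Definition alg_class := alg -> Prop.

Definition same_class (V W : alg_class) : Prop := forall A, V A <-> W A.

Definition subvariety_K2 (V : alg_class) : Prop :=
  exists Sigma : identity -> Prop,
    forall A, V A <-> (in_K2 A /\ forall e, Sigma e -> satisfies A e).

(* "The set of subvarieties of K2 (up to equality of classes) has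
   cardinality 2^omega": injection from Cantor space into it, and an
   injection from it into Cantor space. *)
Definition subvarieties_K2_continuum : Prop :=
  (exists F : (nat -> bool) -> alg_class,
      (forall s, subvariety_K2 (F s)) /\
      (forall s t, same_class (F s) (F t) -> s = t)) /\
  (exists G : alg_class -> (nat -> bool),
      forall V W, subvariety_K2 V -> subvariety_K2 W ->
        G V = G W -> same_class V W).

(* Main.v *)
Require Import Defs.
From Stdlib Require Import Classical ClassicalEpsilon FunctionalExtensionality PropExtensionality ProofIrrelevance List Lia Arith.

Record el (V : Type) (E : V -> V -> Prop) := El {
  fA : V -> Prop; fB : V -> Prop;
  fNB : forall a b, fB b -> E a b -> fA a }.
Arguments El {V E}. Arguments fA {V E}. Arguments fB {V E}. Arguments fNB {V E}.

Lemma el_ext V E (x y : el V E) :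
  (forall v, fA x v <-> fA y v) -> (forall v, fB x v <-> fB y v) -> x = y.
Proof.
  destruct x as [A B H], y as [A' B' H']; simpl; intros h1 h2.
  assert (A = A') by (apply functional_extensionality; intro; apply propositional_extensionality; auto).
  assert (B = B') by (apply functional_extensionality; intro; apply propositional_extensionality; auto).
  subst. f_equal. apply proof_irrelevance.
Qed.

Lemma el_eq V E (x y : el V E) : x = y -> (forall v, fA x v <-> fA y v) /\ (forall v, fB x v <-> fB y v).
Proof. intros ->; split; tauto. Qed.

Definition symm V (E : V -> V -> Prop) := forall a b, E a b -> E b a.

Definition emeet V E (x y : el V E) : el V E :=
  El (fun v => fA x v /\ fA y v) (fun v => fB x v /\ fB y v)
     (fun a b hb he => conj (fNB x a b (proj1 hb) he) (fNB y a b (proj2 hb) he)).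
Definition ejoin V E (x y : el V E) : el V E :=
  El (fun v => fA x v \/ fA y v) (fun v => fB x v \/ fB y v)
     (fun a b hb he => match hb with or_introl h => or_introl (fNB x a b h he)
                                   | or_intror h => or_intror (fNB y a b h he) end).
Definition ezero V E : el V E := El (fun _ => False) (fun _ => False) (fun _ _ h _ => h).
Definition eone V E : el V E := El (fun _ => True) (fun _ => True) (fun _ _ _ _ => I).
Definition edm V E (Hs : symm V E) (x : el V E) : el V E :=
  El (fun v => ~ fB x v) (fun v => ~ fA x v)
     (fun a b hb he hBa => hb (fNB x b a hBa (Hs _ _ he))).
Definition estar V E (Hs : symm V E) (x : el V E) : el V E :=
  El (fun v => ~ fA x v) (fun v => forall u, E v u -> ~ fA x u)
     (fun a b hb he => hb a (Hs _ _ he)).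

Definition galg V E (Hs : symm V E) : alg :=
  Alg (el V E) (@emeet V E) (@ejoin V E) (@estar V E Hs) (@edm V E Hs) (ezero V E) (eone V E).

Definition intr V (E : V -> V -> Prop) (S : V -> Prop) v := forall u, E v u -> S u.
Arguments intr {V}.

Lemma int_ext V (E : V -> V -> Prop) (P Q : V -> Prop) :
  (forall v, P v <-> Q v) -> forall v, intr E P v <-> intr E Q v.
Proof. unfold intr; intros h v; split; intros H u hu; apply h; auto. Qed.

Lemma galg_K2 V E (Hr : forall a, E a a) (Hs : symm V E)
  (Hd : forall v a b c, E v a -> E a b -> E b c -> exists a', E v a' /\ E a' c) :
  in_K2 (galg V E Hs).
Proof.
  assert (int23 : forall S v, intr E (intr E S) v <-> intr E (intr E (intr E S)) v).
  { intros S v; unfold intr; split.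
    - intros H a ha b hb c hc. destruct (Hd v a b c ha hb hc) as [a' [h1 h2]]. eauto.
    - intros H a ha b hb. apply (H a ha b hb b (Hr b)). }
  assert (psA : forall x v, fA (estar V E Hs (edm V E Hs x)) v <-> fB x v).
  { intros x v; simpl; split; [apply NNPP | tauto]. }
  assert (psB : forall x v, fB (estar V E Hs (edm V E Hs x)) v <-> intr E (fB x) v).
  { intros x v; simpl; unfold intr; split; intros H u hu; [apply NNPP|]; auto. }
  split; [split; [repeat split|] |].
  all: try (intros; apply el_ext; simpl; intros; tauto).
  - split; [|split; [|split; [|split; [|split]]]].
   +
    intros x y; unfold le; simpl; split; intro H.
    * destruct (el_eq _ _ _ _ H) as [h1 h2]; simpl in *.
      apply el_ext; simpl; intro v; split; try tauto; intro hy; split; auto.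
      -- intro hx. apply (h1 v); auto.
      -- intros u hu hxu. apply (h1 u); split; auto. exact (fNB y u v hy (Hs _ _ hu)).
    * destruct (el_eq _ _ _ _ H) as [h1 h2]; simpl in *.
      apply el_ext; simpl; intro v; split; try tauto.
      -- intros [hy hx]. exact (proj2 (proj2 (h1 v) hy) hx).
      -- intros [hy hx]. apply (proj2 (proj2 (h2 v) hy) v (Hr v)). exact (fNB x v v hx (Hr v)).
    + intros x; apply el_ext; simpl; intro v; split; [apply NNPP|tauto|apply NNPP|tauto].
    + intros x y; apply el_ext; simpl; intro v; split; [apply not_and_or|tauto|apply not_and_or|tauto].
    + intros x y; apply el_ext; simpl; intro v; tauto.
    + apply el_ext; simpl; intro v; tauto.
    + apply el_ext; simpl; intro v; tauto.
  - split; [|split].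
    +
      intros x y; unfold le, ps; apply el_ext; simpl; intro v; split; try tauto.
    + intros x y; unfold le; apply el_ext; simpl; intro v; split; try tauto.
      all: intros [h1 h2]; split; [tauto|]; destruct (classic (fB y v)) as [hb|hb];
        pose proof (fNB y v v); pose proof (fNB x v v); pose proof (Hr v); tauto.
    + intros x; simpl; unfold ps.
      set (u := emeet V E x (estar V E Hs (edm V E Hs x))).
      assert (hu : forall v, fB u v <-> intr E (fB x) v).
      { intro v; unfold u; simpl; unfold intr; split.
        - intros [_ H] w hw. apply NNPP; auto.
        - intros H; split; [apply (H v (Hr v))|]; intros w hw; auto. }
      assert (psA' : forall x, fA (estar V E Hs (edm V E Hs x)) = fB x).
      { intro y; apply functional_extensionality; intro; apply propositional_extensionality; apply psA. }
      assert (psB' : forall x, fB (estar V E Hs (edm V E Hs x)) = intr E (fB x)).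
      { intro y; apply functional_extensionality; intro; apply propositional_extensionality; apply psB. }
      assert (hu' : fB u = intr E (fB x)).
      { apply functional_extensionality; intro; apply propositional_extensionality; apply hu. }
      apply el_ext; intro v.
      * rewrite !psA', !psB', hu'. apply int23.
      * rewrite !psB', hu'. apply int23.
Qed.

Inductive fm := FV (k : nat) | FN (f : fm) | FA (f g : fm) | FB (f : fm) | FT.

Fixpoint tr (f : fm) : term :=
  match f with
  | FV k => tStar (tStar (tVar k))
  | FN f => tStar (tr f)
  | FA f g => tMeet (tr f) (tr g)
  | FB f => tStar (tDm (tr f))
  | FT => tOne
  end.

Fixpoint sem V (E : V -> V -> Prop) (R : nat -> V -> Prop) (f : fm) : V -> Prop :=
  match f with
  | FV k => R k
  | FN f => fun v => ~ sem V E R f v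
  | FA f g => fun v => sem V E R f v /\ sem V E R g v
  | FB f => intr E (sem V E R f)
  | FT => fun _ => True
  end.
Arguments sem {V}.

Lemma tr_sem V E Hs (val : nat -> el V E) f : forall x,
  (fA (eval (galg V E Hs) val (tr f)) x <-> sem E (fun k => fA (val k)) f x) /\
  (fB (eval (galg V E Hs) val (tr f)) x <-> intr E (sem E (fun k => fA (val k)) f) x).
Proof.
  induction f as [k|f IH|f IHf g IHg|f IH|]; intro x; simpl; unfold intr.
  - split; split; intros H; try intros u hu; try apply NNPP; auto;
    intro h; apply h; auto.
  - split; split.
    + intros H h; apply H, IH; auto.
    + intros H h; apply H, IH; auto.
    + intros H u hu h; apply (H u hu), IH; auto.
    + intros H u hu h; apply (H u hu), IH; auto.
  - split; split.
    + intros [h1 h2]; split; [apply IHf|apply IHg]; auto.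
    + intros [h1 h2]; split; [apply IHf|apply IHg]; auto.
    + intros [h1 h2] u hu; split; [apply (proj2 (IHf x))|apply (proj2 (IHg x))]; auto.
    + intros H; split; [apply (proj2 (IHf x))|apply (proj2 (IHg x))]; intros u hu; apply H; auto.
  - split; split.
    + intros H; apply (proj1 (proj2 (IH x))); apply NNPP; auto.
    + intros H h; apply h, (proj2 (proj2 (IH x))); auto.
    + intros H u hu; apply (proj1 (proj2 (IH u))); apply NNPP; auto.
    + intros H u hu h; apply h, (proj2 (proj2 (IH u))); exact (H u hu).
  - tauto.
Qed.

Definition bigand (l : list fm) : fm := fold_right FA FT l.

Lemma sem_bigand V E R (l : list fm) (x : V) :
  sem E R (bigand l) x <-> forall f, In f l -> sem E R f x.
Proof.
  induction l as [|g l IH]; simpl.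
  - split; auto; intros _ f [].
  - split.
    + intros [h1 h2] f [<-|hf]; auto. apply IH; auto.
    + intros H; split; auto. apply IH; auto.
Qed.

Definition LL (N : nat) := List.seq 0 (2 * N).
Definition pp (k : nat) := if Nat.even k then S k else Nat.pred k.

Lemma even_or_odd k : (Nat.even k = true /\ exists j, k = 2 * j) \/ (Nat.even k = false /\ exists j, k = 2 * j + 1).
Proof.
  destruct (Nat.Even_or_Odd k) as [[j hj]|[j hj]].
  - left; split; [apply Nat.even_spec; exists j; auto| eauto].
  - right; split; [|eauto]. rewrite <- Nat.negb_odd. rewrite (proj2 (Nat.odd_spec k)); [auto|exists j; auto].
Qed.

Lemma pp_pp k : pp (pp k) = k.
Proof.
  unfold pp. destruct (even_or_odd k) as [[he [j ->]]|[he [j ->]]]; rewrite he.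
  - destruct (even_or_odd (S (2*j))) as [[he' [i hi]]|[he' _]]; [lia|]. rewrite he'. lia.
  - replace (Nat.pred (2*j+1)) with (2*j) by lia.
    destruct (even_or_odd (2*j)) as [[he' _]|[he' [i hi]]]; [|lia]. rewrite he'. lia.
Qed.

Lemma pp_lt k N : k < 2 * N -> pp k < 2 * N.
Proof. unfold pp. destruct (even_or_odd k) as [[he [j ->]]|[he [j ->]]]; rewrite he; lia. Qed.

Lemma pp_2i i : pp (2 * i) = 2 * i + 1.
Proof. unfold pp. destruct (even_or_odd (2*i)) as [[he _]|[he [j hj]]]; [rewrite he; lia|lia]. Qed.
Lemma pp_2i1 i : pp (2 * i + 1) = 2 * i.
Proof. unfold pp. destruct (even_or_odd (2*i+1)) as [[he [j hj]]|[he _]]; [lia|rewrite he; lia]. Qed.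

Definition Ex N := FN (bigand (map (fun k => FN (FV k)) (LL N))).
Definition Uq N := bigand (flat_map (fun k => map (fun l => FN (FA (FV k) (FV l)))
                     (filter (fun l => negb (Nat.eqb k l)) (LL N))) (LL N)).
Definition Pt N := bigand (map (fun k => FN (FA (FV k) (FN (FB (FN (FV (pp k))))))) (LL N)).
Definition Cf N := FA (Ex N) (FA (Uq N) (Pt N)).
Definition dia f := FN (FB (FN f)).
Definition Pat N := FA (FB (FB (Cf N))) (bigand (map (fun k => dia (dia (FV k))) (LL N))).

Lemma in_LL k N : In k (LL N) <-> k < 2 * N.
Proof. unfold LL. rewrite in_seq. lia. Qed.

Lemma sem_Ex V E R N (x : V) : sem E R (Ex N) x <-> exists k, k < 2 * N /\ R k x.
Proof.
  unfold Ex; simpl. rewrite sem_bigand. split.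
  - intros H. apply NNPP; intro H'. apply H. intros f hf. apply in_map_iff in hf.
    destruct hf as [k [<- hk]]. simpl. intro hr. apply H'. exists k; split; auto. apply in_LL; auto.
  - intros [k [hk hr]] H. apply (H (FN (FV k))); auto. apply in_map_iff. exists k; split; auto. apply in_LL; auto.
Qed.

Lemma sem_Uq V E R N (x : V) : sem E R (Uq N) x <->
  forall k l, k < 2 * N -> l < 2 * N -> k <> l -> ~ (R k x /\ R l x).
Proof.
  unfold Uq. rewrite sem_bigand. split.
  - intros H k l hk hl hkl. apply (H (FN (FA (FV k) (FV l)))).
    apply in_flat_map. exists k; split; [apply in_LL; auto|]. apply in_map_iff. exists l; split; auto.
    apply filter_In; split; [apply in_LL; auto|]. apply Bool.negb_true_iff, Nat.eqb_neq; auto.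
  - intros H f hf. apply in_flat_map in hf. destruct hf as [k [hk hf]]. apply in_map_iff in hf.
    destruct hf as [l [<- hl]]. apply filter_In in hl. destruct hl as [hl hkl].
    apply Bool.negb_true_iff, Nat.eqb_neq in hkl. apply in_LL in hk, hl. simpl. apply H; auto.
Qed.

Lemma sem_Pt V E R N (x : V) : sem E R (Pt N) x <->
  forall k, k < 2 * N -> R k x -> forall y, E x y -> ~ R (pp k) y.
Proof.
  unfold Pt. rewrite sem_bigand. split.
  - intros H k hk hr y hy hr'. apply (H (FN (FA (FV k) (FN (FB (FN (FV (pp k)))))))).
    + apply in_map_iff. exists k; split; auto. apply in_LL; auto.
    + simpl. split; auto. intro h. apply (h y hy hr').
  - intros H f hf. apply in_map_iff in hf. destruct hf as [k [<- hk]]. apply in_LL in hk.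
    simpl. intros [hr h]. apply h. intros y hy hr'. apply (H k hk hr y hy hr').
Qed.

Lemma sem_dia V E R f (x : V) : sem E R (dia f) x <-> exists y, E x y /\ sem E R f y.
Proof.
  unfold dia; simpl; unfold intr. split.
  - intros H. apply NNPP; intro H'. apply H. intros u hu h. apply H'; eauto.
  - intros [y [hy hs]] H. apply (H y hy hs).
Qed.

From Stdlib Require Cantor.

Definition V N := {k : nat | k < 2 * N}.
Definition E N (x y : V N) : Prop := proj1_sig y <> pp (proj1_sig x).

Lemma pp_neq k : pp k <> k.
Proof. unfold pp; destruct (even_or_odd k) as [[he [j ->]]|[he [j ->]]]; rewrite he; lia. Qed.
Lemma pp_inj a b : pp a = pp b -> a = b.
Proof. intro h; rewrite <- (pp_pp a), <- (pp_pp b), h; auto. Qed.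
Lemma E_refl N x : E N x x.
Proof. unfold E; intro h; apply (pp_neq (proj1_sig x)); auto. Qed.
Lemma E_sym N : symm (V N) (E N).
Proof. intros x y h h'. apply h. rewrite h', pp_pp. reflexivity. Qed.
Lemma V_eq N (x y : V N) : proj1_sig x = proj1_sig y -> x = y.
Proof. destruct x as [a ha], y as [b hb]; simpl; intros ->; f_equal; apply proof_irrelevance. Qed.

Lemma two_step N (hN : 2 <= N) (x y : V N) : exists a, E N x a /\ E N a y.
Proof.
  set (p := pp (proj1_sig x)). set (q := pp (proj1_sig y)).
  assert (H : exists c, c < 3 /\ c <> p /\ c <> q).
  { destruct (Nat.eq_dec p 0); destruct (Nat.eq_dec q 0); try (exists 0; lia);
    destruct (Nat.eq_dec p 1); destruct (Nat.eq_dec q 1); try (exists 1; lia); exists 2; lia. }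
  destruct H as [c [hc [hp hq]]].
  assert (hcN : c < 2 * N) by lia.
  exists (exist _ c hcN); unfold E; simpl; split; auto.
  intro h. apply hq. unfold q. rewrite <- (pp_pp c). f_equal. symmetry; exact h.
Qed.

Lemma php a : forall b (f : nat -> nat), (forall x, x < a -> f x < b) ->
  (forall x y, x < a -> y < a -> f x = f y -> x = y) -> a <= b.
Proof.
  induction a as [|a IH]; intros b f hb hi; [lia|].
  assert (hfa : f a < b) by (apply hb; lia).
  assert (hne : forall x, x < a -> f x <> f a) by (intros x hx e; apply hi in e; lia).
  set (g := fun x => if f x <? f a then f x else f x - 1).
  assert (a <= b - 1); [|lia].
  apply (IH (b - 1) g).
  - intros x hx. unfold g. specialize (hne x hx). specialize (hb x ltac:(lia)).
    destruct (Nat.ltb_spec (f x) (f a)); lia.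
  - intros x y hx hy. unfold g. pose proof (hne x hx); pose proof (hne y hy).
    intro e. apply hi; try lia.
    destruct (Nat.ltb_spec (f x) (f a)); destruct (Nat.ltb_spec (f y) (f a)); lia.
Qed.

Lemma key M N (hM : 2 <= M) (R : nat -> V M -> Prop) x : sem (E M) R (Pat N) x -> M = N.
Proof.
  unfold Pat; cbn [sem]. intros [hC hS].
  assert (hall : forall y, sem (E M) R (Cf N) y).
  { intro y. destruct (two_step M hM x y) as [a [h1 h2]]. exact (hC a h1 y h2). }
  assert (hsurj : forall k, k < 2*N -> exists w, R k w).
  { intros k hk. rewrite sem_bigand in hS. specialize (hS (dia (dia (FV k)))).
    assert (hin : In (dia (dia (FV k))) (map (fun k => dia (dia (FV k))) (LL N))).
    { apply in_map_iff; exists k; split; [reflexivity| apply in_LL; exact hk]. }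
    destruct (proj1 (sem_dia _ _ _ _ _) (hS hin)) as [a [_ ha]].
    destruct (proj1 (sem_dia _ _ _ _ _) ha) as [w [_ hw]]. exists w; exact hw. }
  assert (hEx : forall y, exists k, k < 2*N /\ R k y).
  { intro y; apply (sem_Ex _ (E M)); apply (proj1 (hall y)). }
  assert (hUq : forall y k l, k < 2 * N -> l < 2 * N -> k <> l -> ~ (R k y /\ R l y)).
  { intro y; apply (sem_Uq _ (E M)); apply (proj1 (proj2 (hall y))). }
  assert (hPt : forall y k z, k < 2*N -> R k y -> R (pp k) z -> proj1_sig z = pp (proj1_sig y)).
  { intros y k z hk h1 h2. apply NNPP; intro hne.
    exact (proj1 (sem_Pt _ (E M) _ _ _) (proj2 (proj2 (hall y))) k hk h1 z hne h2). }
  set (lam := fun (y : V M) => proj1_sig (constructive_indefinite_description _ (hEx y))).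
  assert (lam_spec : forall y, lam y < 2 * N /\ R (lam y) y).
  { intro y. unfold lam. destruct (constructive_indefinite_description _ (hEx y)) as [k hk]; exact hk. }
  assert (lam_inj : forall y y', lam y = lam y' -> y = y').
  { intros y y' e. destruct (lam_spec y) as [hk hr]. destruct (lam_spec y') as [_ hr'].
    rewrite <- e in hr'.
    destruct (hsurj (pp (lam y)) (pp_lt _ _ hk)) as [w hw].
    apply V_eq, pp_inj. rewrite <- (hPt y _ w hk hr hw), <- (hPt y' _ w hk hr' hw). reflexivity. }
  assert (h1 : 2 * M <= 2 * N).
  { apply (php _ _ (fun x => match lt_dec x (2*M) with left h => lam (exist _ x h) | right _ => 0 end)).
    - intros x1 hx. destruct (lt_dec x1 (2*M)) as [h|h]; [apply lam_spec|lia].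
    - intros x1 y1 hx hy. destruct (lt_dec x1 (2*M)) as [h|h]; [|lia].
      destruct (lt_dec y1 (2*M)) as [h'|h']; [|lia].
      intro e. apply lam_inj in e. exact (f_equal (@proj1_sig _ _) e). }
  assert (h2 : 2 * N <= 2 * M).
  { apply (php _ _ (fun k => match lt_dec k (2*N) with
       left h => proj1_sig (proj1_sig (constructive_indefinite_description _ (hsurj k h))) | right _ => 0 end)).
    - intros k hk. destruct (lt_dec k (2*N)) as [h|h]; [|lia].
      destruct (constructive_indefinite_description _ (hsurj k h)) as [w hw]. simpl.
      exact (proj2_sig w).
    - intros k l hk hl. destruct (lt_dec k (2*N)) as [h|h]; [|lia].
      destruct (lt_dec l (2*N)) as [h'|h']; [|lia].
      destruct (constructive_indefinite_description _ (hsurj k h)) as [w hw].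
      destruct (constructive_indefinite_description _ (hsurj l h')) as [w' hw']. simpl.
      intro e. apply V_eq in e. subst w'.
      destruct (Nat.eq_dec k l) as [|hkl]; auto. exfalso. exact (hUq w k l h h' hkl (conj hw hw')). }
  lia.
Qed.

Definition galgV N := galg (V N) (E N) (E_sym N).

Lemma valid M N (hM : 2 <= M) : M <> N -> satisfies (galgV M) (tr (Pat N), tZero).
Proof.
  intros hMN val. simpl. apply el_ext; intro v; simpl; split; try tauto.
  - intro h. apply (proj1 (proj1 (tr_sem _ _ (E_sym _) val (Pat N) v))) in h. apply hMN. exact (key M N hM _ v h).
  - intro h. apply (proj1 (proj2 (tr_sem _ _ (E_sym _) val (Pat N) v))) in h. apply hMN.
    exact (key M N hM _ v (h v (E_refl M v))).
Qed.

Lemma refute N (hN : 2 <= N) : ~ satisfies (galgV N) (tr (Pat N), tZero).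
Proof.
  intro H.
  set (R := fun k (y : V N) => proj1_sig y = k).
  set (val := fun k => El (V:=V N) (E:=E N) (R k) (intr (E N) (R k)) (fun a b hb he => hb a (E_sym N _ _ he))).
  specialize (H val). cbn [fst snd] in H.
  assert (h0 : 0 < 2 * N) by lia.
  set (x0 := exist (fun k => k < 2 * N) 0 h0 : V N).
  destruct (el_eq _ _ _ _ H) as [h1 _]. apply (proj1 (h1 x0)).
  apply (proj2 (proj1 (tr_sem _ _ (E_sym _) val (Pat N) x0))).
  change (sem (E N) R (Pat N) x0).
  unfold Pat; cbn [sem]. split.
  - intros a _ b _. unfold Cf; cbn [sem]. split; [|split].
    + apply sem_Ex. exists (proj1_sig b); split; [exact (proj2_sig b)|reflexivity].
    + apply sem_Uq. intros k l _ _ hkl [e1 e2]. unfold R in *. congruence.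
    + apply sem_Pt. intros k _ hk y hy hr. unfold R, E in *. apply hy. rewrite hr, hk. reflexivity.
  - apply sem_bigand. intros f hf. apply in_map_iff in hf. destruct hf as [k [<- hk]].
    apply in_LL in hk. set (w := exist (fun k => k < 2 * N) k hk : V N).
    destruct (two_step N hN x0 w) as [a [ha1 ha2]].
    apply sem_dia. exists a; split; auto. apply sem_dia. exists w; split; auto. reflexivity.
Qed.

Fixpoint encT (t : term) : nat :=
  match t with
  | tVar n => Cantor.to_nat (0, n)
  | tMeet a b => Cantor.to_nat (1, Cantor.to_nat (encT a, encT b))
  | tJoin a b => Cantor.to_nat (2, Cantor.to_nat (encT a, encT b))
  | tStar a => Cantor.to_nat (3, encT a)
  | tDm a => Cantor.to_nat (4, encT a)
  | tZero => Cantor.to_nat (5, 0)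
  | tOne => Cantor.to_nat (6, 0)
  end.

Lemma encT_inj : forall s t, encT s = encT t -> s = t.
Proof.
  induction s; destruct t; cbn [encT]; intro e; apply Cantor.to_nat_inj in e;
    pose proof (f_equal fst e) as e1; pose proof (f_equal snd e) as e2; cbn [fst snd] in e1, e2;
    try discriminate e1; try reflexivity.
  - subst; reflexivity.
  - apply Cantor.to_nat_inj in e2.
    pose proof (f_equal fst e2) as e3; pose proof (f_equal snd e2) as e4; cbn [fst snd] in e3, e4.
    f_equal; auto.
  - apply Cantor.to_nat_inj in e2.
    pose proof (f_equal fst e2) as e3; pose proof (f_equal snd e2) as e4; cbn [fst snd] in e3, e4.
    f_equal; auto.
  - f_equal; auto.
  - f_equal; auto.
Qed.

Definition encI (e : identity) : nat := Cantor.to_nat (encT (fst e), encT (snd e)).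
Lemma encI_inj e f : encI e = encI f -> e = f.
Proof.
  destruct e as [a b], f as [c d]; unfold encI; cbn [fst snd]; intro h.
  apply Cantor.to_nat_inj in h.
  pose proof (f_equal fst h) as e1; pose proof (f_equal snd h) as e2; cbn [fst snd] in e1, e2.
  f_equal; apply encT_inj; auto.
Qed.

Definition eN n : identity := (tr (Pat (n + 2)), tZero).
Definition AN n : alg := galgV (n + 2).

Lemma AN_K2 n : in_K2 (AN n).
Proof. apply galg_K2; [apply E_refl | intros v a b c _ _ _; apply two_step; lia]. Qed.

Lemma AN_sat m n : m <> n -> satisfies (AN n) (eN m).
Proof. intro h. apply valid; lia. Qed.

Lemma AN_nsat n : ~ satisfies (AN n) (eN n).
Proof. apply refute; lia. Qed.

Definition Fs (s : nat -> bool) : alg_class :=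
  fun A => in_K2 A /\ forall n, s n = false -> satisfies A (eN n).

Theorem theorem6p5 : subvarieties_K2_continuum.
Proof.
  split.
  - exists Fs. split.
    + intro s. exists (fun e => exists n, s n = false /\ e = eN n). intro A; unfold Fs; split.
      * intros [h1 h2]; split; auto. intros e [n [hn ->]]; auto.
      * intros [h1 h2]; split; auto. intros n hn; apply h2; eauto.
    + intros s t H. apply functional_extensionality; intro n.
      assert (key : forall s t, same_class (Fs s) (Fs t) -> s n = true -> t n = false -> False).
      { intros s' t' H' hs ht. destruct (H' (AN n)) as [h1 _].
        assert (hin : Fs s' (AN n)).
        { split; [apply AN_K2|]. intros m hm. apply AN_sat. intro e; subst; congruence. }
        destruct (h1 hin) as [_ h3]. exact (AN_nsat n (h3 n ht)). }
      destruct (s n) eqn:hs, (t n) eqn:ht; try reflexivity.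
      * exfalso; exact (key s t H hs ht).
      * exfalso; refine (key t s _ ht hs). intro A; split; apply H.
  - set (Th := fun (V : alg_class) (e : identity) => forall A, V A -> satisfies A e).
    exists (fun V n => if excluded_middle_informative (exists e, encI e = n /\ Th V e) then true else false).
    intros V W [SV hV] [SW hW] hG.
    assert (hT : forall e, Th V e <-> Th W e).
    { intro e. pose proof (f_equal (fun g => g (encI e)) hG) as h. simpl in h.
      destruct (excluded_middle_informative (exists e', encI e' = encI e /\ Th V e')) as [[e1 [he1 hv]]|hv];
      destruct (excluded_middle_informative (exists e', encI e' = encI e /\ Th W e')) as [[e2 [he2 hw]]|hw];
      try discriminate.
      - apply encI_inj in he1, he2; subst; tauto.
      - split; intro h'; exfalso; [apply hv|apply hw]; eauto. }
    assert (hsub : forall (V W : alg_class) (SV SW : identity -> Prop),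
      (forall A, V A <-> (in_K2 A /\ forall e, SV e -> satisfies A e)) ->
      (forall A, W A <-> (in_K2 A /\ forall e, SW e -> satisfies A e)) ->
      (forall e, Th W e -> Th V e) -> forall A, V A -> W A).
    { intros V0 W0 S0 S1 h0 h1 hT' A hA. apply h1. split; [apply h0; auto|].
      intros e he. refine (hT' e _ A hA).
      intros B hB. apply h1 in hB. apply (proj2 hB); auto. }
    intro A; split.
    + apply (hsub V W SV SW hV hW). intro e; apply hT.
    + apply (hsub W V SW SV hW hV). intro e; apply hT.
Qed.
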